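(* Let $M$ be a PVM on a finite-dimensional Hilbert space consisting of rank-one projections ($w(M)=1$) which commutes with a density operator $\sigma$. Then for every density operator $\rho$ and every $a\in\mathbb{R}$, $$\mathrm{P}^M_\rho\{\log\mathrm{P}^M_\sigma(\omega)\ge a\}\le\exp\Bigl(-\sup_{t\ge0}\bigl(at-\log\mathrm{Tr}\rho\sigma^t\bigr)\Bigr).$$
   Context: $\mathrm{P}^M_\rho(\omega)=\mathrm{Tr}\rho M_\omega$ is the outcome distribution of the PVM $M=\{M_\omega\}$ in state $\rho$; $M$ commutes with $\sigma$ if $\sigma M_\omega=M_\omega\sigma$ for all $\omega$; $w(M)=\sup_\omega\dim(\mathrm{range}\,M_\omega)$. *)

(* Defs.v *)
From HB Require Import structures.
From mathcomp Require Import all_boot all_order all_algebra.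
From mathcomp Require Import sesquilinear spectral.
From mathcomp Require Import complex.
From mathcomp Require Import all_classical all_reals.
From mathcomp Require Import ereal exp.

Set Implicit Arguments.
Unset Strict Implicit.
Unset Printing Implicit Defensive.

Import Order.TTheory GRing.Theory Num.Theory.
Local Open Scope ring_scope.

(* The Hilbert space is C^n with C = R[i], R a real type.
   Matrices act on row vectors; A ^t* is the adjoint (conjugate transpose). *)
Section QDefs.
Variable R : realType.
Local Notation C := R[i].

Definition psdmx n (A : 'M[C]_n) : Prop :=
  map_mx Num.conj A^T = A /\ forall v : 'rV[C]_n, 0 <= (v *m A *m map_mx Num.conj v^T) 0 0.

Definition density n (rho : 'M[C]_n) : Prop := psdmx rho /\ \tr rho = 1.

Definition PVM n (Omega : finType) (M : Omega -> 'M[C]_n) : Prop :=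
  (forall w, map_mx Num.conj (M w)^T = M w /\ M w *m M w = M w) /\
  \sum_(w : Omega) M w = 1%:M.

Definition commutes_with n (Omega : finType) (M : Omega -> 'M[C]_n)
  (sigma : 'M[C]_n) : Prop :=
  forall w, sigma *m M w = M w *m sigma.

Definition pvm_width n (Omega : finType) (M : Omega -> 'M[C]_n) : nat :=
  \max_(w : Omega) \rank (M w).

Definition outcome_prob n (Omega : finType) (M : Omega -> 'M[C]_n)
  (rho : 'M[C]_n) (w : Omega) : R :=
  complex.Re (\tr (rho *m M w)).

(* sigma^t for a positive semidefinite sigma and real t, via the spectral
   decomposition sigma = P^-1 diag(lambda) P (P unitary), with
   sigma^t = P^-1 diag(lambda^t) P; lambda^t = powR lambda t
   (so 0^t = 0 for t <> 0 and 0^0 = 1). *)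
Definition mxpowR n (sigma : 'M[C]_n) (t : R) : 'M[C]_n :=
  invmx (spectralmx sigma) *m
  diag_mx (\row_i (real_complex R (powR (complex.Re (spectral_diag sigma 0 i)) t)))
  *m spectralmx sigma.

Definition elog (x : R) : \bar R := if 0 < x then (ln x)%:E else -oo%E.

End QDefs.

(* Main.v *)
Set Warnings "-notation-overridden,-ambiguous-paths,-notation-incompatible-prefix".
Require Import Defs.
From HB Require Import structures.
From mathcomp Require Import all_boot all_order all_algebra.
From mathcomp Require Import sesquilinear spectral.
From mathcomp Require Import complex.
From mathcomp Require Import all_classical all_reals.
From mathcomp Require Import ereal exp.
From mathcomp Require Import zify lra sequences.

Import Order.TTheory GRing.Theory Num.Theory.
Local Open Scope ring_scope.
Local Open Scope classical_set_scope.
Section H.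
Variable R : realType.
Local Notation C := R[i].

Lemma rank1_scalar n (Mw S : 'M[C]_n) : (\rank Mw <= 1)%N -> Mw *m Mw = Mw ->
  S *m Mw = Mw *m S -> Mw *m S = \tr (S *m Mw) *: Mw.
Proof.
move=> Hr Hid Hc.
have [Hr0|Hr1] : \rank Mw = 0%N \/ \rank Mw = 1%N by lia.
  by move/eqP: Hr0; rewrite mxrank_eq0 => /eqP ->; rewrite mul0mx mulmx0 scaler0.
have Mw0 : Mw != 0 by rewrite -mxrank_eq0 Hr1.
have := mulmx_base Mw; move: (col_base Mw) (row_base Mw); rewrite Hr1 => x y E.
have sc : forall A : 'M[C]_1, A = (A 0 0)%:M by move=> A; exact: mx11_scalar.
have Hs : (y *m x) 0 0 = 1.
  move: Hid; rewrite -{1 2}E mulmxA -(mulmxA x y x) (sc (y *m x)) mul_mx_scalar.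
  rewrite -scalemxAl E => /eqP; rewrite -subr_eq0 -{2}(scale1r Mw) -scalerBl.
  rewrite scaler_eq0 (negbTE Mw0) orbF subr_eq0 => /eqP h.
  by rewrite -[RHS]h [LHS]mxE eqxx mulr1n.
have H1 : Mw *m S = ((y *m S *m x) 0 0) *: Mw.
  rewrite -{1}Hid -mulmxA -Hc mulmxA -{1 2}E.
  rewrite -!mulmxA (mulmxA S) (mulmxA y (S *m x) y) (mulmxA y S x) (sc (y *m S *m x)).
  by rewrite mul_scalar_mx -scalemxAr E [in RHS]mxE eqxx mulr1n.
rewrite {1}H1 mxtrace_mulC H1 mxtraceZ -{2}E mxtrace_mulC.
by rewrite /mxtrace big_ord1 Hs mulr1.
Qed.

Lemma pow_eig n (Mw S : 'M[C]_n) c t : S \is normalmx -> Mw *m S = c *: Mw ->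
  Mw *m mxpowR S t = real_complex R (powR (complex.Re c) t) *: Mw.
Proof.
move=> /orthomx_spectralP HS HM.
have Pu := spectral_unit S.
set P := spectralmx S in HS Pu *; set D := spectral_diag S in HS *.
set U := Mw *m invmx P.
have EU : Mw = U *m P by rewrite /U mulmxKV.
have HU : U *m diag_mx D = c *: U.
  move: HM; rewrite {1}HS EU !mulmxA mulmxK // => /(congr1 (mulmx^~ (invmx P))).
  by rewrite mulmxK // -scalemxAl mulmxK.
clearbody U.
rewrite /mxpowR -/P EU !mulmxA mulmxK // scalemxAl; congr (_ *m _).
apply/matrixP=> i j; rewrite mul_mx_diag !mxE.
move/matrixP: HU => /(_ i j); rewrite mul_mx_diag !mxE => Hij.
have [->|nz] := eqVneq (U i j) 0; first by rewrite mul0r mulr0.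
have Dj : D 0 j = c.
  by apply/(mulIf nz); rewrite [LHS]mulrC Hij.
rewrite /D in Dj; rewrite Dj.
by rewrite mulrC.
Qed.

Lemma ReD (x y : C) : complex.Re (x + y) = complex.Re x + complex.Re y.
Proof. by case: x; case: y. Qed.

Lemma ReM_real (r : R) (z : C) : complex.Re (real_complex R r * z) = r * complex.Re z.
Proof. by case: z => u v /=; rewrite mul0r subr0. Qed.

Lemma Re_sum (I : finType) (F : I -> C) :
  complex.Re (\sum_i F i) = \sum_i complex.Re (F i).
Proof. exact: (big_morph _ ReD). Qed.

Lemma Re_ge0 (z : C) : 0 <= z -> 0 <= complex.Re z.
Proof. by rewrite lecE => /andP[]. Qed.
End H.


Theorem lemma12 (R : realType) (n : nat) (Omega : finType)
  (M : Omega -> 'M[R[i]]_n) (sigma rho : 'M[R[i]]_n) (a : R) :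
  PVM M -> pvm_width M = 1%N -> density sigma -> commutes_with M sigma ->
  density rho ->
  ((\sum_(w : Omega | (a%:E <= elog (outcome_prob M sigma w))%E)
      outcome_prob M rho w)%:E
   <= expeR (- ereal_sup [set ((a * t)%R%:E - elog (complex.Re (\tr (rho *m mxpowR sigma t))))%E
                         | t in [set t : R | (0 <= t)%R]]))%E.
Proof.
move=> [HM Hsum] Hw [[Hsig _] _] Hcomm [[_ Hpsd] _].
have Hnorm : sigma \is normalmx by apply/normalmxP; rewrite Hsig.
have Hr w : (\rank (M w) <= 1)%N by rewrite -Hw /pvm_width; exact: (leq_bigmax w).
have Hc w : M w *m sigma = \tr (sigma *m M w) *: M w.
  by apply: rank1_scalar; [exact: Hr | exact: (HM w).2 | exact: Hcomm].
have Hpow w t : M w *m mxpowR sigma t =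
    real_complex R (powR (outcome_prob M sigma w) t) *: M w.
  exact: pow_eig.
have HT t : complex.Re (\tr (rho *m mxpowR sigma t)) =
    \sum_w powR (outcome_prob M sigma w) t * outcome_prob M rho w.
  rewrite -[mxpowR sigma t]mul1mx -Hsum mulmx_suml.
  under eq_bigr do rewrite Hpow.
  rewrite mulmx_sumr.
  have -> : forall (F : Omega -> 'M[R[i]]_n), \tr (\sum_w F w) = \sum_w \tr (F w).
    by move=> F; exact: raddf_sum.
  rewrite Re_sum; apply: eq_bigr => w _.
  by rewrite -scalemxAr mxtraceZ ReM_real.
have Hq w : 0 <= outcome_prob M rho w.
  rewrite /outcome_prob; apply: Re_ge0.
  rewrite -(HM w).2 mulmxA mxtrace_mulC mulmxA.
  rewrite /mxtrace; apply: sumr_ge0 => i _.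
  have -> : (M w *m rho *m M w) i i =
      (row i (M w) *m rho *m map_mx Num.conj (row i (M w))^T) 0 0.
    rewrite -row_mul !mxE; apply: eq_bigr => k _; rewrite !mxE.
    have := (HM w).1; move/matrixP => /(_ k i); rewrite !mxE => <-.
    by [].
  exact: Hpsd.
set p := outcome_prob M sigma in HT *.
set q := outcome_prob M rho in HT Hq *.
set L := \sum_(w | _) q w.
have HL t : 0 <= t -> L * expR (a * t) <= \sum_w powR (p w) t * q w.
  move=> t0; rewrite /L mulr_suml.
  apply: (@le_trans _ _ (\sum_(w | (a%:E <= elog (p w))%E) powR (p w) t * q w)).
    apply: ler_sum => w Pw; rewrite mulrC; apply: ler_wpM2r; first exact: Hq.
    move: Pw; rewrite /elog; case: ifPn => [p0|_]; last by rewrite leeNy_eq.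
    rewrite lee_fin => h.
    rewrite -ler_ln ?posrE ?expR_gt0 ?powR_gt0 // expRK ln_powR mulrC.
    exact: ler_wpM2l.
  rewrite [X in _ <= X](bigID (fun w => (a%:E <= elog (p w))%E)) /= lerDl.
  by apply: sumr_ge0 => w _; apply: mulr_ge0; [exact: powR_ge0 | exact: Hq].
have [L0|L0] := leP L 0.
  by apply: le_trans (expeR_ge0 _); rewrite lee_fin.
suff Hs : (ereal_sup [set ((a * t)%R%:E - elog (complex.Re (\tr (rho *m mxpowR sigma t))))%E
                         | t in [set t : R | (0 <= t)%R]] <= (- ln L)%:E)%E.
  apply: (@le_trans _ _ (expeR (ln L)%:E)); first by rewrite /= lnK ?posrE.
  by rewrite lee_expeR leeNr -EFinN.
apply: ge_ereal_sup => _ [t t0 <-].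
rewrite HT.
have hT := HL t t0.
have Tpos : 0 < \sum_w powR (p w) t * q w.
  exact: lt_le_trans (mulr_gt0 L0 (expR_gt0 _)) hT.
rewrite /elog Tpos -EFinB lee_fin.
have : ln (L * expR (a * t)) <= ln (\sum_w powR (p w) t * q w).
  by rewrite ler_ln ?posrE // mulr_gt0 // expR_gt0.
rewrite lnM ?posrE ?expR_gt0 // expRK => h.
lra.
Qed.
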